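(* For any set of rule schemes $\mathcal{R}\subseteq\{N,H,P,F,wF\}$: if $\mathbf{STL}(\mathcal{R})\vdash\Gamma\Rightarrow A$ then $\mathbf{ST}(\mathcal{R})\vDash\Gamma\Rightarrow A$; and if $\Gamma\vdash_{i\mathbf{STL}(\mathcal{R})}A$ then $i\mathbf{ST}(\mathcal{R})\vDash\Gamma\Rightarrow A$.
   Context: Formulas of $\mathcal{L}_\nabla$ are built from propositional variables and constants $1,\top,\bot$ by binary $\wedge,\vee,\otimes,\to$ and unary $\nabla$. A sequent is $\Gamma\Rightarrow A$ with $\Gamma$ a finite (possibly empty) sequence of formulas; $\nabla\Gamma$ applies $\nabla$ to each member. $\mathbf{STL}$ has axioms $A\Rightarrow A$, $\Rightarrow1$, $\nabla1\Rightarrow1$, $\Gamma\Rightarrow\top$, $\Gamma,\bot,\Sigma\Rightarrow A$ and rules (premises / conclusion): cut: $\Gamma\Rightarrow A$ and $\Pi,A,\Sigma\Rightarrow B$ / $\Pi,\Gamma,\Sigma\Rightarrow B$; $L\wedge$: $\Gamma,A,\Sigma\Rightarrow C$ / $\Gamma,A\wedge B,\Sigma\Rightarrow C$ and $\Gamma,B,\Sigma\Rightarrow C$ / $\Gamma,A\wedge B,\Sigma\Rightarrow C$; $R\wedge$: $\Gamma\Rightarrow A$ and $\Gamma\Rightarrow B$ / $\Gamma\Rightarrow A\wedge B$; $L\vee$: $\Gamma,A,\Sigma\Rightarrow C$ and $\Gamma,B,\Sigma\Rightarrow C$ / $\Gamma,A\vee B,\Sigma\Rightarrow C$; $R\vee$: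 $\Gamma\Rightarrow A$ / $\Gamma\Rightarrow A\vee B$ and $\Gamma\Rightarrow B$ / $\Gamma\Rightarrow A\vee B$; $L1$: $\Gamma,\Sigma\Rightarrow A$ / $\Gamma,1,\Sigma\Rightarrow A$; $L\otimes$: $\Gamma,A,B,\Sigma\Rightarrow C$ / $\Gamma,A\otimes B,\Sigma\Rightarrow C$; $R\otimes$: $\Gamma\Rightarrow A$ and $\Sigma\Rightarrow B$ / $\Gamma,\Sigma\Rightarrow A\otimes B$; $(\nabla)$: $A\Rightarrow B$ / $\nabla A\Rightarrow\nabla B$; Oplax: $\nabla A,\nabla B\Rightarrow C$ / $\nabla(A\otimes B)\Rightarrow C$; $L\to$: $\Gamma\Rightarrow A$ and $\Pi,B,\Sigma\Rightarrow C$ / $\Pi,\Gamma,\nabla(A\to B),\Sigma\Rightarrow C$; $R\to$: $A,\nabla\Gamma\Rightarrow B$ / $\Gamma\Rightarrow A\to B$. Rule schemes: $(N)$: $\Gamma\Rightarrow A$ / $\nabla\Gamma\Rightarrow\nabla A$; $(P)$: $\Gamma\Rightarrow\nabla A$ / $\Gamma\Rightarrow A$; $(F)$: $\Gamma\Rightarrow A$ / $\Gamma\Rightarrow\nabla A$; $(wF)$: $\nabla A\Rightarrow\bot$ / $A\Rightarrow\bot$; $(H)$: $\Gamma,A_1\to B_1,\dots,A_n\to B_n\Rightarrow C$ / $\nabla\Gamma,\nabla A_1\to\nabla B_1,\dots,\nabla A_n\to\nabla B_n\Rightarrow\nabla C$ ($n\ge0$). Structural rules: weakening $\Gamma,\Sigma\Rightarrow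 B$ / $\Gamma,A,\Sigma\Rightarrow B$; contraction $\Gamma,A,A,\Sigma\Rightarrow B$ / $\Gamma,A,\Sigma\Rightarrow B$; exchange $\Gamma,A,B,\Sigma\Rightarrow C$ / $\Gamma,B,A,\Sigma\Rightarrow C$. $\mathbf{STL}(\mathcal{R})$ is $\mathbf{STL}$ plus the schemes in $\mathcal{R}$; $i\mathbf{STL}(\mathcal{R})$ is $\mathbf{STL}(\mathcal{R})$ plus the structural rules; $\Gamma\vdash_L A$ means $L$ derives $\Gamma\Rightarrow A$. Semantics: a quantale is a monoidal poset (monoid with multiplication monotone in each argument) with all joins over which multiplication distributes; a locale is a quantale whose multiplication is binary meet with unit the top. A non-commutative spacetime is $\mathcal{S}=(\mathscr{X},\nabla)$ with $\mathscr{X}$ a quantale, $\nabla$ join preserving and oplax monoidal ($\nabla e\le e$, $\nabla(a\otimes b)\le\nabla a\otimes\nabla b$); a spacetime is one where $\mathscr{X}$ is a locale. Its implication $\to_{\mathcal{S}}$ is characterized by $a\otimes\nabla b\le c$ iff $b\le a\to_{\mathcal{S}}c$. A valuation $V$ maps formulas to $\mathscr{X}$ with $V(1)=e$, $V(\bot)=$ bottom, $V(\top)=$ top, and $V$ commuting with $\wedge,\vee,\otimes,\nabla,\to$ (interpreted by meet, join, $\otimes$, $\nabla$, $\to_{\mathcal{S}}$). $(\mathcal{S},V)\vDash\gamma_1,\dots,\gamma_n\Rightarrow A$ iff $V(\gamma_1)\otimes\cdots\otimes V(\gamma_n)\le V(A)$ (empty product $=e$); $\mathcal{S}\vDash$ means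 for all $V$; a class $\vDash$ means for every member. $\mathcal{S}$ satisfies $(N)$ if $\nabla e=e$ and $\nabla(a\otimes b)=\nabla a\otimes\nabla b$; $(H)$ if $\nabla$ preserves all the structure including the implication; $(P)$ if $\nabla a\le a$; $(F)$ if $a\le\nabla a$; $(wF)$ if $\nabla a=0$ implies $a=0$. $\mathbf{ST}(\mathcal{R})$ is the class of non-commutative spacetimes satisfying all schemes in $\mathcal{R}$, and $i\mathbf{ST}(\mathcal{R})$ the class of spacetimes satisfying them. *)

(* Defs.v *)
From Stdlib Require Import List.
Import ListNotations.

Inductive formula : Type :=
| Var  : nat -> formula
| One  : formula
| Top  : formula
| Bot  : formula
| And  : formula -> formula -> formula
| Or   : formula -> formula -> formula
| Tens : formula -> formula -> formula
| Imp  : formula -> formula -> formula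
| Nab  : formula -> formula.

Inductive scheme : Type := sN | sH | sP | sF | swF.

Definition impl_of (p : formula * formula) : formula := Imp (fst p) (snd p).
Definition nimpl_of (p : formula * formula) : formula := Imp (Nab (fst p)) (Nab (snd p)).

(** [derives R st G A] : the calculus STL(R) (st = false) or iSTL(R) (st = true)
    derives the sequent G => A. *)
Inductive derives (R : scheme -> Prop) (st : bool) : list formula -> formula -> Prop :=
| d_id : forall A, derives R st [A] A
| d_one : derives R st [] One
| d_nab1 : derives R st [Nab One] One
| d_top : forall G, derives R st G Top
| d_bot : forall G S A, derives R st (G ++ Bot :: S) A
| d_cut : forall G P S A B,
    derives R st G A -> derives R st (P ++ A :: S) B -> derives R st (P ++ G ++ S) B
| d_andL1 : forall G S A B C,
    derives R st (G ++ A :: S) C -> derives R st (G ++ And A B :: S) C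
| d_andL2 : forall G S A B C,
    derives R st (G ++ B :: S) C -> derives R st (G ++ And A B :: S) C
| d_andR : forall G A B,
    derives R st G A -> derives R st G B -> derives R st G (And A B)
| d_orL : forall G S A B C,
    derives R st (G ++ A :: S) C -> derives R st (G ++ B :: S) C ->
    derives R st (G ++ Or A B :: S) C
| d_orR1 : forall G A B, derives R st G A -> derives R st G (Or A B)
| d_orR2 : forall G A B, derives R st G B -> derives R st G (Or A B)
| d_oneL : forall G S A, derives R st (G ++ S) A -> derives R st (G ++ One :: S) A
| d_tensL : forall G S A B C,
    derives R st (G ++ A :: B :: S) C -> derives R st (G ++ Tens A B :: S) C
| d_tensR : forall G S A B,
    derives R st G A -> derives R st S B -> derives R st (G ++ S) (Tens A B)
| d_nab : forall A B, derives R st [A] B -> derives R st [Nab A] (Nab B)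
| d_oplax : forall A B C,
    derives R st [Nab A; Nab B] C -> derives R st [Nab (Tens A B)] C
| d_impL : forall G P S A B C,
    derives R st G A -> derives R st (P ++ B :: S) C ->
    derives R st (P ++ G ++ Nab (Imp A B) :: S) C
| d_impR : forall G A B,
    derives R st (A :: map Nab G) B -> derives R st G (Imp A B)
| d_N : R sN -> forall G A, derives R st G A -> derives R st (map Nab G) (Nab A)
| d_P : R sP -> forall G A, derives R st G (Nab A) -> derives R st G A
| d_F : R sF -> forall G A, derives R st G A -> derives R st G (Nab A)
| d_wF : R swF -> forall A, derives R st [Nab A] Bot -> derives R st [A] Bot
| d_H : R sH -> forall G (L : list (formula * formula)) C,
    derives R st (G ++ map impl_of L) C ->
    derives R st (map Nab G ++ map nimpl_of L) (Nab C)
| d_weak : st = true -> forall G S A B,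
    derives R st (G ++ S) B -> derives R st (G ++ A :: S) B
| d_contr : st = true -> forall G S A B,
    derives R st (G ++ A :: A :: S) B -> derives R st (G ++ A :: S) B
| d_exch : st = true -> forall G S A B C,
    derives R st (G ++ A :: B :: S) C -> derives R st (G ++ B :: A :: S) C.

Record quantale : Type := {
  qcar :> Type;
  qle : qcar -> qcar -> Prop;
  qle_refl : forall a, qle a a;
  qle_trans : forall a b c, qle a b -> qle b c -> qle a c;
  qle_antisym : forall a b, qle a b -> qle b a -> a = b;
  qmul : qcar -> qcar -> qcar;
  qe : qcar;
  qmul_assoc : forall a b c, qmul a (qmul b c) = qmul (qmul a b) c;
  qmul_e_l : forall a, qmul qe a = a;
  qmul_e_r : forall a, qmul a qe = a;
  qmul_mono : forall a a' b b', qle a a' -> qle b b' -> qle (qmul a b) (qmul a' b');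
  qjoin : (qcar -> Prop) -> qcar;
  qjoin_ub : forall (X : qcar -> Prop) x, X x -> qle x (qjoin X);
  qjoin_least : forall (X : qcar -> Prop) y, (forall x, X x -> qle x y) -> qle (qjoin X) y;
  qmul_join_l : forall (X : qcar -> Prop) a,
      qmul a (qjoin X) = qjoin (fun y => exists x, X x /\ y = qmul a x);
  qmul_join_r : forall (X : qcar -> Prop) a,
      qmul (qjoin X) a = qjoin (fun y => exists x, X x /\ y = qmul x a)
}.

Section Ops.
Variable Q : quantale.
Definition qbot : Q := qjoin Q (fun _ => False).
Definition qtop : Q := qjoin Q (fun _ => True).
Definition qjoin2 (a b : Q) : Q := qjoin Q (fun x => x = a \/ x = b).
Definition qmeet (a b : Q) : Q := qjoin Q (fun x => qle Q x a /\ qle Q x b).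
End Ops.
Arguments qjoin2 {Q} a b.
Arguments qmeet {Q} a b.

Definition is_locale (Q : quantale) : Prop :=
  (forall a b : Q, qmul Q a b = qmeet a b) /\ qe Q = qtop Q.

Record spacetime : Type := {
  sq :> quantale;
  nab : sq -> sq;
  nab_join : forall X : sq -> Prop,
      nab (qjoin sq X) = qjoin sq (fun y => exists x, X x /\ y = nab x);
  nab_e : qle sq (nab (qe sq)) (qe sq);
  nab_mul : forall a b, qle sq (nab (qmul sq a b)) (qmul sq (nab a) (nab b))
}.

(** The implication: a -> c is the largest b with a (x) nab b <= c
    (it exists since nab preserves joins and (x) distributes over joins). *)
Definition simp (S : spacetime) (a c : S) : S :=
  qjoin S (fun b => qle S (qmul S a (nab S b)) c).
Arguments simp {S} a c.

Record valuation (S : spacetime) (V : formula -> S) : Prop := {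
  v_one : V One = qe S;
  v_bot : V Bot = qbot S;
  v_top : V Top = qtop S;
  v_and : forall A B, V (And A B) = qmeet (V A) (V B);
  v_or : forall A B, V (Or A B) = qjoin2 (V A) (V B);
  v_tens : forall A B, V (Tens A B) = qmul S (V A) (V B);
  v_nab : forall A, V (Nab A) = nab S (V A);
  v_imp : forall A B, V (Imp A B) = simp (V A) (V B)
}.

Definition qprod (S : spacetime) (l : list S) : S := fold_right (qmul S) (qe S) l.

Definition sat_seq (S : spacetime) (V : formula -> S) (G : list formula) (A : formula) : Prop :=
  qle S (qprod S (map V G)) (V A).

Definition valid_seq (S : spacetime) (G : list formula) (A : formula) : Prop :=
  forall V, valuation S V -> sat_seq S V G A.

Definition sat_N (S : spacetime) : Prop :=
  nab S (qe S) = qe S /\ forall a b, nab S (qmul S a b) = qmul S (nab S a) (nab S b).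
Definition sat_H (S : spacetime) : Prop :=
  nab S (qe S) = qe S
  /\ (forall a b, nab S (qmul S a b) = qmul S (nab S a) (nab S b))
  /\ nab S (qtop S) = qtop S
  /\ nab S (qbot S) = qbot S
  /\ (forall a b, nab S (qmeet a b) = qmeet (nab S a) (nab S b))
  /\ (forall a b, nab S (qjoin2 a b) = qjoin2 (nab S a) (nab S b))
  /\ (forall a c, nab S (simp a c) = simp (nab S a) (nab S c)).
Definition sat_P (S : spacetime) : Prop := forall a, qle S (nab S a) a.
Definition sat_F (S : spacetime) : Prop := forall a, qle S a (nab S a).
Definition sat_wF (S : spacetime) : Prop := forall a, nab S a = qbot S -> a = qbot S.

Definition sat_scheme (S : spacetime) (r : scheme) : Prop :=
  match r with
  | sN => sat_N S | sH => sat_H S | sP => sat_P S | sF => sat_F S | swF => sat_wF S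
  end.

Definition in_ST (R : scheme -> Prop) (S : spacetime) : Prop :=
  forall r, R r -> sat_scheme S r.
Definition in_iST (R : scheme -> Prop) (S : spacetime) : Prop :=
  is_locale S /\ in_ST R S.

(* Main.v *)
Require Import Defs.
From Stdlib Require Import List.
Import ListNotations.

Section Q.
Variable Q : quantale.
Notation le := (qle Q).
Notation mul := (qmul Q).

Lemma prod_app (l1 l2 : list (qcar Q)) :
  fold_right mul (qe Q) (l1 ++ l2) = mul (fold_right mul (qe Q) l1) (fold_right mul (qe Q) l2).
Proof.
  induction l1 as [|a l IH]; simpl. now rewrite qmul_e_l.
  now rewrite IH, qmul_assoc.
Qed.

Lemma ctx_mono g s x y : le x y -> le (mul g (mul x s)) (mul g (mul y s)).
Proof. intro H. apply qmul_mono. apply qle_refl. apply qmul_mono; auto. apply qle_refl. Qed.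

Lemma ctx_join g s (X : qcar Q -> Prop) d :
  (forall x, X x -> le (mul g (mul x s)) d) -> le (mul g (mul (qjoin Q X) s)) d.
Proof.
  intro H. rewrite qmul_join_r, qmul_join_l. apply qjoin_least.
  intros y [z [[x [Hx ->]] ->]]. auto.
Qed.

Lemma bot_le a : le (qbot Q) a.
Proof. apply qjoin_least. tauto. Qed.

Lemma le_top a : le a (qtop Q).
Proof. apply qjoin_ub. exact I. Qed.

Lemma meet_l a b : le (qmeet a b) a.
Proof. apply qjoin_least. tauto. Qed.
Lemma meet_r a b : le (qmeet a b) b.
Proof. apply qjoin_least. tauto. Qed.
Lemma meet_glb a b c : le c a -> le c b -> le c (qmeet a b).
Proof. intros. apply qjoin_ub. auto. Qed.

Lemma join2_l a b : le a (qjoin2 a b).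
Proof. apply qjoin_ub. auto. Qed.
Lemma join2_r a b : le b (qjoin2 a b).
Proof. apply qjoin_ub. auto. Qed.

Lemma join2_eq a b : le a b -> qjoin2 a b = b.
Proof.
  intro H. apply qle_antisym. apply qjoin_least. intros x [->| ->]; auto. apply qle_refl.
  apply join2_r.
Qed.
End Q.

Section S.
Variable S : spacetime.
Notation le := (qle S).
Notation mul := (qmul S).

Lemma nab_mono a b : le a b -> le (nab S a) (nab S b).
Proof.
  intro H. rewrite <- (join2_eq _ _ _ H). unfold qjoin2. rewrite nab_join.
  apply qjoin_ub. exists a. auto.
Qed.

Lemma nab_prod_le (l : list (qcar S)) :
  le (nab S (qprod S l)) (qprod S (map (nab S) l)).
Proof.
  induction l as [|a l IH]; simpl. apply nab_e.
  eapply qle_trans. apply nab_mul. apply qmul_mono. apply qle_refl. exact IH.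
Qed.

Lemma nab_prod_eq (l : list (qcar S)) :
  nab S (qe S) = qe S -> (forall a b, nab S (mul a b) = mul (nab S a) (nab S b)) ->
  nab S (qprod S l) = qprod S (map (nab S) l).
Proof.
  intros H1 H2. unfold qprod. induction l as [|a l IH]; simpl. exact H1.
  rewrite H2. now rewrite IH.
Qed.

Lemma simp_spec a b : le (mul a (nab S (simp a b))) b.
Proof.
  unfold simp. rewrite nab_join, qmul_join_l. apply qjoin_least.
  intros y [z [[x [Hx ->]] ->]]. exact Hx.
Qed.

Lemma simp_intro a b c : le (mul a (nab S c)) b -> le c (simp a b).
Proof. intro H. apply qjoin_ub. exact H. Qed.
End S.

Lemma sound R st G A (D : derives R st G A) :
  forall S : spacetime, in_ST R S -> (st = true -> is_locale S) ->
  forall V, valuation S V -> qle S (qprod S (map V G)) (V A).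
Proof.
  induction D; intros S0 HR HL V HV;
    repeat match goal with IH : _ |- _ =>
      specialize (IH S0 HR HL V HV) end;
    unfold qprod in *; simpl in *;
    repeat rewrite map_app in *; simpl in *; repeat rewrite prod_app in *; simpl in *.
  - rewrite qmul_e_r. apply qle_refl.
  - rewrite (v_one _ _ HV). apply qle_refl.
  - rewrite (v_nab _ _ HV), (v_one _ _ HV), qmul_e_r. apply nab_e.
  - rewrite (v_top _ _ HV). apply le_top.
  - rewrite (v_bot _ _ HV). apply ctx_join. tauto.
  - eapply qle_trans; [|exact IHD2]. apply ctx_mono. exact IHD1.
  - rewrite (v_and _ _ HV). eapply qle_trans; [|exact IHD].
    apply ctx_mono. apply meet_l.
  - rewrite (v_and _ _ HV). eapply qle_trans; [|exact IHD].
    apply ctx_mono. apply meet_r.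
  - rewrite (v_and _ _ HV). apply meet_glb; auto.
  - rewrite (v_or _ _ HV). apply ctx_join. intros x [-> | ->]; auto.
  - rewrite (v_or _ _ HV). eapply qle_trans. exact IHD. apply join2_l.
  - rewrite (v_or _ _ HV). eapply qle_trans. exact IHD. apply join2_r.
  - rewrite (v_one _ _ HV), qmul_e_l. auto.
  - rewrite (v_tens _ _ HV), <- qmul_assoc. auto.
  - rewrite (v_tens _ _ HV). apply qmul_mono; auto.
  - rewrite (v_nab _ _ HV), (v_nab _ _ HV), qmul_e_r. apply nab_mono.
    simpl in IHD. now rewrite qmul_e_r in IHD.
  - rewrite (v_nab _ _ HV), (v_tens _ _ HV), qmul_e_r.
    simpl in IHD. rewrite !(v_nab _ _ HV), qmul_e_r in IHD.
    eapply qle_trans. apply nab_mul. exact IHD.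
  - 
    eapply qle_trans; [|exact IHD2].
    rewrite (qmul_assoc _ (fold_right _ _ (map V G))). apply ctx_mono. rewrite (v_nab _ _ HV), (v_imp _ _ HV).
    eapply qle_trans. apply qmul_mono. exact IHD1. apply qle_refl. apply simp_spec.
  - rewrite (v_imp _ _ HV). apply simp_intro.
    simpl in IHD.
    eapply qle_trans; [|exact IHD]. apply qmul_mono. apply qle_refl.
    rewrite map_map. eapply qle_trans. apply nab_prod_le.
    rewrite map_map. erewrite map_ext. apply qle_refl. intro x. simpl. now rewrite (v_nab _ _ HV).
  - destruct (HR sN ltac:(assumption)) as [H1 H2]. rewrite (v_nab _ _ HV).
    rewrite map_map. erewrite map_ext; [|intro x; apply (v_nab _ _ HV)].
    rewrite <- map_map. fold (qprod S0 (map (nab S0) (map V G))).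
    rewrite <- nab_prod_eq; auto. apply nab_mono. exact IHD.
  - pose proof (HR sP ltac:(assumption)) as Hs. simpl in Hs. specialize (Hs (V A)).
    eapply qle_trans. exact IHD. rewrite (v_nab _ _ HV). exact Hs.
  - pose proof (HR sF ltac:(assumption)) as Hs. simpl in Hs. specialize (Hs (V A)).
    eapply qle_trans. exact IHD. rewrite (v_nab _ _ HV). exact Hs.
  - pose proof (HR swF ltac:(assumption)) as Hw. simpl in Hw. rewrite qmul_e_r.
    simpl in IHD. rewrite (v_nab _ _ HV), qmul_e_r, (v_bot _ _ HV) in IHD.
    rewrite (v_bot _ _ HV). rewrite (Hw (V A)). apply qle_refl.
    apply qle_antisym. exact IHD. apply bot_le.
  - destruct (HR sH ltac:(assumption)) as [H1 [H2 [_ [_ [_ [_ H7]]]]]].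
    
    rewrite (v_nab _ _ HV).
    assert (E1 : map V (map Nab G) = map (nab S0) (map V G)).
    { rewrite !map_map. apply map_ext. intro; apply (v_nab _ _ HV). }
    assert (E2 : map V (map nimpl_of L) = map (nab S0) (map V (map impl_of L))).
    { rewrite !map_map. apply map_ext. intros [a b]. unfold nimpl_of, impl_of; simpl.
      rewrite !(v_imp _ _ HV), !(v_nab _ _ HV). now rewrite H7. }
    rewrite E1, E2.
    fold (qprod S0 (map (nab S0) (map V G))).
    fold (qprod S0 (map (nab S0) (map V (map impl_of L)))).
    rewrite <- !nab_prod_eq by auto. rewrite <- H2. apply nab_mono. exact IHD.
  - destruct (HL ltac:(assumption)) as [Hm _]. specialize IHD.
    eapply qle_trans; [|exact IHD]. apply qmul_mono. apply qle_refl.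
    rewrite Hm. apply meet_r.
  - destruct (HL ltac:(assumption)) as [Hm _]. specialize IHD.
    eapply qle_trans; [|exact IHD]. apply qmul_mono. apply qle_refl.
    rewrite qmul_assoc. apply qmul_mono; [|apply qle_refl].
    rewrite Hm. apply meet_glb; apply qle_refl.
  - destruct (HL ltac:(assumption)) as [Hm _]. specialize IHD.
    eapply qle_trans; [|exact IHD]. apply qmul_mono. apply qle_refl.
    rewrite !qmul_assoc. apply qmul_mono; [|apply qle_refl].
    rewrite !Hm. apply meet_glb; [apply meet_r|apply meet_l].
Qed.

Theorem theorem7p10 (R : scheme -> Prop) :
  (forall G A, derives R false G A -> forall S : spacetime, in_ST R S -> valid_seq S G A)
  /\ (forall G A, derives R true G A -> forall S : spacetime, in_iST R S -> valid_seq S G A).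
Proof.
  split.
  - intros G A D S HS V HV. eapply sound; eauto. discriminate.
  - intros G A D S [HL HS] V HV. eapply sound; eauto.
Qed.
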